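(* Let $u,i,v,j\in\mathbb{Z}_n$ with $\alpha=\dim L(u,i)\leqslant\beta=\dim L(v,j)$. Let $h\in L(u,i)$ and $h'\in L(v,j)$ be nonzero vectors annihilated by $X$ (so $e_ih=h$, $e_jh'=h'$). Then the elements $z_{s,t}=\gamma_i^sh\otimes\gamma_j^th'$ ($0\leqslant s\leqslant\alpha-1$, $0\leqslant t\leqslant\beta-1$) form a basis of $L(u,i)\otimes L(v,j)$. Grading $L(u,i)\otimes L(v,j)$ by $\deg z_{s,t}=s+t$, the kernel of the action of $X$ on $L(u,i)\otimes L(v,j)$ has dimension $\alpha$ and is spanned by elements $x_\theta$, $0\leqslant\theta\leqslant\alpha-1$, with $x_\theta$ homogeneous of degree $\theta$ (one element up to scalars in each such degree).
   Context: $k$ is an algebraically closed field; $n,d$ integers with $d\geqslant2$, $d\mid n$, $\mathrm{char}\,k\nmid n$; $q$ a primitive $d$-th root of unity. $\Lambda_{n,d}$ is the path algebra of the cyclic quiver with vertices $e_i$ and arrows $a_i:e_i\to e_{i+1}$ ($i\in\mathbb{Z}_n$) modulo all paths of length $d$; $\gamma_i^m=a_{i+m-1}\cdots a_i$, $\gamma_i^0=e_i$. $\mathcal{D}(\Lambda_{n,d})$ is the Drinfel'd double of the Hopf algebra $\Lambda_{n,d}$; concretely it is generated by $G,X,e_i,a_i$ with relations $G^n=1$, $X^d=0$, $GX=q^{-1}XG$, products of paths as in $\Lambda_{n,d}$, $\gamma_\ell^mG=q^{-m}G\gamma_\ell^m$, $\gamma_\ell^mX=q^{-m}X\gamma_{\ell+1}^m-q^{-m}(m)_q\gamma_{\ell+1}^{m-1}+q^{\ell+1-m}(m)_qG\gamma_{\ell+1}^{m-1}$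 ($(m)_q=1+\cdots+q^{m-1}$), with comultiplication $\Delta(G)=G\otimes G$, $\Delta(X)=X\otimes G+1\otimes X$, $\Delta(e_i)=\sum_{s+t=i}e_s\otimes e_t$, $\Delta(a_i)=\sum_{s+t=i}(e_s\otimes a_t+q^ta_s\otimes e_t)$; tensor products of modules are over $k$ with action via $\Delta$. $E_u=\frac1n\sum_{i,j}q^{-i(u+j)}G^ie_j$. For an integer $r$, $\overline r^-\in\{0,\dots,d-1\}$ is its residue mod $d$. $L(u,j)$ is the simple module (unique up to isomorphism) of dimension $d-\overline{2j+u-1}^-$ on which $E_u$ acts as the identity and whose kernel of $X$ is one-dimensional, spanned by a vector $Y$ with $e_jY=Y$. *)

(* Defs.v *)
From HB Require Import structures.
From mathcomp Require Import all_boot all_order all_algebra.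
From mathcomp.real_closed Require Import mxtens.
Set Implicit Arguments. Unset Strict Implicit. Unset Printing Implicit Defensive.
Import GRing.Theory.
Local Open Scope ring_scope.

(* Index arithmetic in Z_n, represented by 'I_n : i + k (mod n). *)
Definition addo n (i : 'I_n) (k : nat) : 'I_n := iter k (@ordS n) i.

Definition mxpow (K : fieldType) m (A : 'M[K]_m) (k : nat) : 'M[K]_m :=
  iter k (mulmx A) 1%:M.

Definition qint (K : fieldType) (q : K) (m : nat) : K := \sum_(k < m) q ^+ k.

(* A (left) representation of the generators G, X, e_i, a_i (i in Z_n)
   of D(Lambda_{n,d}) on the column space K^m (matrices act on the left). *)
Record Drep (K : fieldType) (n m : nat) := {
  mG : 'M[K]_m;
  mX : 'M[K]_m;
  me : 'I_n -> 'M[K]_m;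
  ma : 'I_n -> 'M[K]_m }.

Fixpoint gam (K : fieldType) n m (R : Drep K n m) (l : 'I_n) (k : nat) : 'M[K]_m :=
  match k with
  | 0 => me R l
  | k'.+1 => ma R (addo l k') *m gam R l k'
  end.

Definition is_Drep (K : fieldType) n (d : nat) (q : K) m (R : Drep K n m) : Prop :=
  mxpow (mG R) n = 1%:M /\
      mxpow (mX R) d = 0 /\
      mG R *m mX R = q^-1 *: (mX R *m mG R) /\
      (forall i j, me R i *m me R j = if i == j then me R i else 0) /\
      \sum_(i < n) me R i = 1%:M /\
      (forall i, ma R i *m me R i = ma R i /\ me R (ordS i) *m ma R i = ma R i) /\
      (forall l, gam R l d = 0) /\
      (forall (l : 'I_n) (k : nat), (k < d)%N ->
         gam R l k *m mG R = (q ^+ k)^-1 *: (mG R *m gam R l k)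
         /\ gam R l k *m mX R =
            (q ^+ k)^-1 *: (mX R *m gam R (ordS l) k)
            - ((q ^+ k)^-1 * qint q k) *: gam R (ordS l) k.-1
            + (q ^+ (l + 1) * (q ^+ k)^-1 * qint q k) *: (mG R *m gam R (ordS l) k.-1)).

Definition submodule (K : fieldType) n m (R : Drep K n m) (S : 'cV[K]_m -> Prop) : Prop :=
  [/\ S 0,
      (forall v w, S v -> S w -> S (v + w)),
      (forall (c : K) v, S v -> S (c *: v)) &
      (forall v, S v -> [/\ S (mG R *m v), S (mX R *m v),
                           (forall i, S (me R i *m v)) & (forall i, S (ma R i *m v))])].

Definition simple_rep (K : fieldType) n m (R : Drep K n m) : Prop :=
  (0 < m)%N /\
  forall S, submodule R S -> (forall v, S v -> v = 0) \/ (forall v, S v).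

Definition Eidem (K : fieldType) n (q : K) m (R : Drep K n m) (u : 'I_n) : 'M[K]_m :=
  (n%:R)^-1 *: \sum_(i < n) \sum_(j < n)
      (q ^+ (i * (u + j)))^-1 *: (mxpow (mG R) i *m me R j).

(* R is (a copy of) the simple module L(u,j): a simple D(Lambda_{n,d})-module
   of dimension d - ((2j+u-1) mod d), on which E_u acts as the identity, and
   whose kernel of X is one-dimensional, spanned by Y with e_j Y = Y. *)
Definition is_L (K : fieldType) n d (q : K) m (R : Drep K n m) (u j : 'I_n) : Prop :=
  [/\ is_Drep d q R,
      simple_rep R,
      m = (d - (2 * j + u + d - 1) %% d)%N,
      Eidem q R u = 1%:M &
      exists Y : 'cV[K]_m, [/\ Y != 0, me R j *m Y = Y &
        forall w : 'cV[K]_m, mX R *m w = 0 <-> exists c : K, w = c *: Y]].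

(* Action of X on the tensor product via Delta(X) = X (x) G + 1 (x) X. *)
Definition Xtens (K : fieldType) n m1 m2 (M : Drep K n m1) (N : Drep K n m2)
  : 'M[K]_(m1 * m2) :=
  tensmx (mX M) (mG N) + tensmx (1%:M : 'M[K]_m1) (mX N).

(* Main.v *)
Require Import Defs.
From HB Require Import structures.
From mathcomp Require Import all_boot all_order all_algebra.
From mathcomp.real_closed Require Import mxtens.
Import GRing.Theory.
From mathcomp Require Import ring zify.
From Stdlib Require Import ClassicalEpsilon.
Local Open Scope ring_scope.

Section TensBasics.
Variable K : fieldType.

Lemma tensmxDl m n p r (A B : 'M[K]_(m,n)) (C : 'M[K]_(p,r)) :
  tensmx (A + B) C = tensmx A C + tensmx B C.
Proof. by apply/matrixP=> i j; rewrite !mxE mulrDl. Qed.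
Lemma tensmxDr m n p r (A : 'M[K]_(m,n)) (B C : 'M[K]_(p,r)) :
  tensmx A (B + C) = tensmx A B + tensmx A C.
Proof. by apply/matrixP=> i j; rewrite !mxE mulrDr. Qed.
Lemma tensmxZl m n p r c (A : 'M[K]_(m,n)) (C : 'M[K]_(p,r)) :
  tensmx (c *: A) C = c *: tensmx A C.
Proof. by apply/matrixP=> i j; rewrite !mxE mulrA. Qed.
Lemma tensmxZr m n p r c (A : 'M[K]_(m,n)) (C : 'M[K]_(p,r)) :
  tensmx A (c *: C) = c *: tensmx A C.
Proof. by apply/matrixP=> i j; rewrite !mxE mulrCA. Qed.

Lemma tens_cvE m1 m2 (u : 'cV[K]_m1) (w : 'cV[K]_m2) k l (y : 'I_(1*1)) :
  (tensmx u w) (mxtens_index (k,l)) y = u k 0 * w l 0.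
Proof.
rewrite !mxE mxtens_indexK /=; congr (u k _ * w l _); apply: ord1.
Qed.

Lemma shift_sum (V : lmodType K) (m : nat) (f : nat -> K) (g : nat -> V) :
  f 0%N = 0 ->
  \sum_(s < m) f s *: g s.-1 = \sum_(s < m) (if (s.+1 < m)%N then f s.+1 else 0) *: g s.
Proof.
move=> f0; case: m => [|m]; first by rewrite !big_ord0.
rewrite big_ord_recl /= f0 scale0r add0r big_ord_recr /= ltnn scale0r addr0.
by apply: eq_bigr => s _; rewrite /= ltnS ltn_ord.
Qed.
End TensBasics.

Section Tens.
Variables (K : fieldType) (m1 m2 : nat) (b1 : nat -> 'cV[K]_m1) (b2 : nat -> 'cV[K]_m2)
 (X1 : 'M[K]_m1) (X2 G2 : 'M[K]_m2) (cx1 cx2 cg2 : nat -> K).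
Hypothesis free1 : forall f : 'I_m1 -> K, \sum_(s < m1) f s *: b1 s = 0 -> forall s, f s = 0.
Hypothesis span1 : forall v, exists f : 'I_m1 -> K, v = \sum_(s<m1) f s *: b1 s.
Hypothesis free2 : forall f : 'I_m2 -> K, \sum_(s < m2) f s *: b2 s = 0 -> forall s, f s = 0.
Hypothesis span2 : forall v, exists f : 'I_m2 -> K, v = \sum_(s<m2) f s *: b2 s.

Lemma scaleE p r (c : K) (A : 'M[K]_(p,r)) i j' : (c *: A) i j' = c * A i j'.
Proof. by rewrite mxE. Qed.

Definition z s t := tensmx (b1 s) (b2 t).

Lemma tens_free (c : 'I_m1 -> 'I_m2 -> K) :
  \sum_(s < m1) \sum_(t < m2) c s t *: z s t = 0 -> forall s t, c s t = 0.
Proof.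
move=> H s t.
have E : forall k l, \sum_(t < m2) (\sum_(s < m1) c s t * b1 s k 0) * b2 t l 0 = 0.
  move=> k l; move/matrixP: H => /(_ (mxtens_index (k,l)) 0).
  rewrite !mxE summxE => H1; rewrite -[RHS]H1 ; under [RHS]eq_bigr => s' _ do rewrite summxE.
  rewrite [RHS]exchange_big /=; apply: eq_bigr => t' _.
  rewrite mulr_suml; apply: eq_bigr => s' _.
  by rewrite [RHS]mxE /z tens_cvE mulrA.
have E2 : forall k t, \sum_(s < m1) c s t * b1 s k 0 = 0.
  move=> k; apply: free2; apply/matrixP => l y; rewrite [y]ord1 summxE mxE -[RHS](E k l).
  by apply: eq_bigr => t' _; rewrite mxE.
apply: (free1 (fun s => c s t) _ s); apply/matrixP => k y; rewrite [y]ord1 summxE mxE -[RHS](E2 k t).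
by apply: eq_bigr => s' _; rewrite mxE.
Qed.

Lemma tens_span (y : 'M[K]_(m1 * m2, 1 * 1)) :
  exists c : 'I_m1 -> 'I_m2 -> K, y = \sum_(s < m1) \sum_(t < m2) c s t *: z s t.
Proof.
pose F k := proj1_sig (constructive_indefinite_description _ (span1 (delta_mx k 0))).
pose G l := proj1_sig (constructive_indefinite_description _ (span2 (delta_mx l 0))).
have e1 : forall k k', \sum_(s < m1) F k s * b1 s k' 0 = (k' == k)%:R.
  move=> k k'; have := proj2_sig (constructive_indefinite_description _ (span1 (delta_mx k 0))).
  move/matrixP => /(_ k' 0); rewrite mxE eqxx andbT summxE => ->.
  by apply: eq_bigr => s _; rewrite mxE.
have e2 : forall l l', \sum_(t < m2) G l t * b2 t l' 0 = (l' == l)%:R.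
  move=> l l'; have := proj2_sig (constructive_indefinite_description _ (span2 (delta_mx l 0))).
  move/matrixP => /(_ l' 0); rewrite mxE eqxx andbT summxE => ->.
  by apply: eq_bigr => s _; rewrite mxE.
pose Y k l := y (mxtens_index (k, l)) 0.
exists (fun s t => \sum_(k < m1) \sum_(l < m2) Y k l * F k s * G l t).
apply/matrixP => x col; case: (mxtens_indexP x) => k' l'.
rewrite summxE.
have -> : y (mxtens_index (k', l')) col = Y k' l' by rewrite [col]ord1.
transitivity (\sum_(k < m1) \sum_(l < m2) Y k l *
   ((\sum_(s < m1) F k s * b1 s k' 0) * (\sum_(t < m2) G l t * b2 t l' 0))).
  rewrite (bigD1 k') //= [X in _ + X]big1 => [|k kk]; last first.
    apply: big1 => l _; rewrite e1 eq_sym (negbTE kk) mul0r mulr0 //.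
  rewrite addr0 (bigD1 l') //= [X in _ + X]big1 => [|l ll]; last first.
    by rewrite e1 e2 eq_sym (negbTE ll) mulr0 mulr0.
  by rewrite addr0 e1 e2 !eqxx mulr1 mulr1.
symmetry.
under eq_bigr => s _ do rewrite summxE.
under eq_bigr => s _ do under eq_bigr => t _ do rewrite scaleE /z tens_cvE.
under eq_bigr => s _ do under eq_bigr => t _ do rewrite mulr_suml.
under eq_bigr => s _ do rewrite exchange_big /=.
rewrite exchange_big /=; apply: eq_bigr => k _.
under eq_bigr => s _ do under eq_bigr => l _ do rewrite mulr_suml.
under eq_bigr => s _ do rewrite exchange_big /=.
rewrite exchange_big /=; apply: eq_bigr => l _.
rewrite big_distrlr /= mulr_sumr; apply: eq_bigr => s _.
rewrite mulr_sumr; apply: eq_bigr => t _.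
by ring.
Qed.


Hypothesis X1b : forall s, X1 *m b1 s = cx1 s *: b1 s.-1.
Hypothesis cx10 : cx1 0%N = 0.
Hypothesis cx1nz : forall s, (0 < s < m1)%N -> cx1 s != 0.
Hypothesis X2b : forall s, X2 *m b2 s = cx2 s *: b2 s.-1.
Hypothesis cx20 : cx2 0%N = 0.
Hypothesis cx2nz : forall s, (0 < s < m2)%N -> cx2 s != 0.
Hypothesis G2b : forall t, G2 *m b2 t = cg2 t *: b2 t.
Hypothesis cg2nz : forall t, (t < m2)%N -> cg2 t != 0.
Hypothesis m12 : (m1 <= m2)%N.

Definition XT := tensmx X1 G2 + tensmx (1%:M : 'M[K]_m1) X2.
Definition Sig (C : nat -> nat -> K) := \sum_(s < m1) \sum_(t < m2) C s t *: z s t.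
Definition aa s t := cx1 s * cg2 t.
Definition DD (C : nat -> nat -> K) s t :=
  (if (s.+1 < m1)%N then C s.+1 t * aa s.+1 t else 0) +
  (if (t.+1 < m2)%N then C s t.+1 * cx2 t.+1 else 0).

Lemma XTz s t : XT *m z s t = aa s t *: z s.-1 t + cx2 t *: z s t.-1.
Proof.
rewrite /XT /z mulmxDl !tensmx_mul X1b G2b X2b mul1mx.
by rewrite tensmxZl tensmxZr scalerA tensmxZr.
Qed.

Lemma XTSig C : XT *m Sig C = Sig (DD C).
Proof.
rewrite /Sig mulmx_sumr.
under eq_bigr => s _ do rewrite mulmx_sumr.
under eq_bigr => s _ do under eq_bigr => t _ do rewrite -scalemxAr XTz scalerDr !scalerA.
under eq_bigr => s _ do rewrite big_split /=.
rewrite big_split /= exchange_big /=.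
rewrite (eq_bigr (fun t : 'I_m2 => \sum_(s < m1)
   (if (s.+1 < m1)%N then C s.+1 t * aa s.+1 t else 0) *: z s t)); last first.
  move=> t _; rewrite (@shift_sum _ _ _ (fun s => C s t * aa s t) (fun s => z s t)) //.
  by rewrite /aa cx10 !mul0r mulr0.
rewrite [X in _ + X](eq_bigr (fun s : 'I_m1 => \sum_(t < m2)
   (if (t.+1 < m2)%N then C s t.+1 * cx2 t.+1 else 0) *: z s t)); last first.
  move=> s _; rewrite (@shift_sum _ _ _ (fun t => C s t * cx2 t) (fun t => z s t)) //.
  by rewrite cx20 mulr0.
rewrite exchange_big -big_split /=; apply: eq_bigr => s _.
rewrite -big_split /=; apply: eq_bigr => t _.
by rewrite -scalerDl.
Qed.

Lemma Sig_free C : Sig C = 0 -> forall s t, (s < m1)%N -> (t < m2)%N -> C s t = 0.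
Proof.
move=> H s t hs ht.
exact: (tens_free (fun (s : 'I_m1) (t : 'I_m2) => C s t) H (Ordinal hs) (Ordinal ht)).
Qed.

Lemma Sig_eq C C' : (forall s t, (s < m1)%N -> (t < m2)%N -> C s t = C' s t) -> Sig C = Sig C'.
Proof.
by move=> H; apply: eq_bigr => s _; apply: eq_bigr => t _; rewrite H.
Qed.

Lemma SigZ c C : c *: Sig C = Sig (fun s t => c * C s t).
Proof.
rewrite /Sig scaler_sumr; apply: eq_bigr => s _.
by rewrite scaler_sumr; apply: eq_bigr => t _; rewrite scalerA.
Qed.

Lemma Sig_sum (I : finType) (F : I -> nat -> nat -> K) :
  \sum_(th : I) Sig (F th) = Sig (fun s t => \sum_(th : I) F th s t).
Proof.
rewrite /Sig exchange_big; apply: eq_bigr => s _.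
rewrite exchange_big; apply: eq_bigr => t _.
by rewrite scaler_suml.
Qed.


Lemma Sig0 : Sig (fun _ _ => 0) = 0.
Proof. by rewrite /Sig big1 // => s _; rewrite big1 // => t _; rewrite scale0r. Qed.

Fixpoint wf (th s : nat) : K :=
  match s with
  | 0 => 1
  | s'.+1 => - wf th s' * cx2 (th - s') / aa s'.+1 (th - s'.+1)
  end.

Definition W (th s t : nat) : K := if (s + t == th)%N then wf th s else 0.

Lemma aa_nz s t : (0 < s < m1)%N -> (t < m2)%N -> aa s t != 0.
Proof. by move=> hs ht; rewrite /aa mulf_neq0 ?cx1nz ?cg2nz. Qed.

Lemma DD_W th s t : (th < m1)%N -> DD (W th) s t = 0.
Proof.
move=> hth; rewrite /DD /W.
have [E|E] := eqVneq (s.+1 + t)%N th.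
  have h1 : (s.+1 < m1)%N by rewrite -E in hth; apply: leq_ltn_trans hth; rewrite leq_addr.
  have h2 : (t.+1 < m2)%N.
    by apply: leq_trans m12; apply: leq_ltn_trans hth; rewrite -E addSnnS leq_addl.
  rewrite h1 h2 -addSnnS E eqxx /=.
  have -> : (th - s)%N = t.+1 by rewrite -E addSn subSn ?leq_addr // addKn.
  have -> : (th - s.+1)%N = t by rewrite -E addKn.
  have hz : aa s.+1 t != 0.
    by apply: aa_nz => //; apply: ltn_trans h2.
  by rewrite mulNr -mulrA mulVf // mulr1 addNr.
rewrite -addSnnS (negbTE E) mul0r.
by rewrite mul0r !if_same addr0.
Qed.

Lemma ker_coefA C : (forall s t, (s < m1)%N -> (t < m2)%N -> DD C s t = 0) ->
  forall s t, (s + t < m1)%N -> C s t = C 0%N (s + t)%N * wf (s + t) s.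
Proof.
move=> HD; elim=> [|s IH] t hst; first by rewrite /= mulr1.
have h1 : (s.+1 < m1)%N by apply: leq_ltn_trans hst; rewrite leq_addr.
have h2 : (t.+1 < m2)%N.
  by apply: leq_trans m12; apply: leq_ltn_trans hst; rewrite addSnnS leq_addl.
have := HD s t (ltnW h1) (ltnW h2); rewrite /DD h1 h2.
rewrite (IH t.+1); last by rewrite -addSnnS.
rewrite -addSnnS /=.
have -> : (s.+1 + t - s)%N = t.+1 by rewrite addSn subSn ?leq_addr // addKn.
have -> : (s.+1 + t - s.+1)%N = t by rewrite addKn.
have hz : aa s.+1 t != 0 by apply: aa_nz => //; apply: ltn_trans h2.
move/eqP; rewrite addr_eq0 => /eqP H; rewrite -(mulfK hz (C s.+1 t)) H.
by ring.
Qed.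

Lemma ker_coefB C : (forall s t, (s < m1)%N -> (t < m2)%N -> DD C s t = 0) ->
  forall k s t, (s + k.+1)%N = m1 -> (m1 <= s + t)%N -> (t < m2)%N -> C s t = 0.
Proof.
move=> HD; elim=> [|k IH] s t hk hst ht.
  case: t hst ht => [|t] hst ht; first by exfalso; lia.
  have hs : (s < m1)%N by lia.
  have := HD s t hs (ltnW ht); rewrite /DD.
  have -> : (s.+1 < m1)%N = false by lia.
  rewrite ht add0r; have nz : cx2 t.+1 != 0 by apply: cx2nz; lia.
  by move/eqP; rewrite mulf_eq0 (negbTE nz) orbF => /eqP.
case: t hst ht => [|t] hst ht; first by exfalso; lia.
have hs : (s < m1)%N by lia.
have := HD s t hs (ltnW ht); rewrite /DD.
rewrite (IH s.+1 t) ?mul0r; first last.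
- exact: ltnW.
- lia.
- lia.
rewrite ht if_same add0r; have nz : cx2 t.+1 != 0 by apply: cx2nz; lia.
by move/eqP; rewrite mulf_eq0 (negbTE nz) orbF => /eqP.
Qed.

Lemma ker_coef C : (forall s t, (s < m1)%N -> (t < m2)%N -> DD C s t = 0) ->
  forall s t, (s < m1)%N -> (t < m2)%N ->
  C s t = if (s + t < m1)%N then C 0%N (s + t)%N * wf (s + t) s else 0.
Proof.
move=> HD s t hs ht; case: ifP => h; first exact: ker_coefA.
apply: (@ker_coefB C HD (m1 - s.+1) s t) => //; first lia.
by rewrite leqNgt h.
Qed.


Definition ext (c : 'I_m1 -> 'I_m2 -> K) (s t : nat) : K :=
  match (insub s : option 'I_m1), (insub t : option 'I_m2) with
  | Some s', Some t' => c s' t'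
  | _, _ => 0
  end.

Lemma extE c (s : 'I_m1) (t : 'I_m2) : ext c s t = c s t.
Proof. by rewrite /ext !valK. Qed.

Lemma sum_delta p k (F : nat -> K) :
  \sum_(th < p) (if (k == th :> nat) then F th else 0) = if (k < p)%N then F k else 0.
Proof.
case: ifP => hk.
  rewrite (bigD1 (Ordinal hk)) //= ifT; last exact: eqxx.
  rewrite big1 ?addr0 // => th hth; case: ifP => // /eqP E.
  by move: hth; rewrite -val_eqE /= -E eqxx.
by rewrite big1 // => th _; case: eqP => // E; move: (ltn_ord th); rewrite -E hk.
Qed.

Definition xx (th : 'I_m1) := Sig (W th).

Theorem abstract_main :
  let homog := fun (th : nat) (y : 'M[K]_(m1 * m2, 1 * 1)) =>
    exists c : 'I_m1 -> 'I_m2 -> K,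
      y = \sum_(s < m1) \sum_(t < m2 | (s + t)%N == th) c s t *: z s t in
  (forall c : 'I_m1 -> 'I_m2 -> K,
     \sum_(s < m1) \sum_(t < m2) c s t *: z s t = 0 -> forall s t, c s t = 0) /\
  (forall y : 'M[K]_(m1 * m2, 1 * 1),
     exists c : 'I_m1 -> 'I_m2 -> K, y = \sum_(s < m1) \sum_(t < m2) c s t *: z s t) /\
  exists x : 'I_m1 -> 'M[K]_(m1 * m2, 1 * 1),
    (forall th : 'I_m1, [/\ x th != 0, XT *m x th = 0 & homog th (x th)]) /\
    (forall b : 'I_m1 -> K, \sum_(th < m1) b th *: x th = 0 -> forall th, b th = 0) /\
    (forall y, XT *m y = 0 <-> exists b : 'I_m1 -> K, y = \sum_(th < m1) b th *: x th) /\
    (forall (th : 'I_m1) y, XT *m y = 0 -> homog th y -> exists c : K, y = c *: x th).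
Proof.
move=> homog; split; first exact: tens_free.
split; first exact: tens_span.
have SigE : forall c : 'I_m1 -> 'I_m2 -> K,
    \sum_(s < m1) \sum_(t < m2) c s t *: z s t = Sig (ext c).
  by move=> c; apply: eq_bigr => s _; apply: eq_bigr => t _; rewrite extE.
have XTx : forall th : 'I_m1, XT *m xx th = 0.
  by move=> th; rewrite /xx XTSig -Sig0; apply: Sig_eq => s t _ _; rewrite DD_W.
exists xx; split.
  move=> th; split => //.
  - apply/eqP => /Sig_free H.
    have := H 0%N th (leq_ltn_trans (leq0n _) (ltn_ord th)) (leq_trans (ltn_ord th) m12).
    by rewrite /W add0n eqxx /= => /eqP; rewrite oner_eq0.
  - exists (fun s t => wf th s); rewrite /xx /Sig; apply: eq_bigr => s _.
    rewrite [RHS]big_mkcond /=; apply: eq_bigr => t _; rewrite /W.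
    by case: ifP => _ //; rewrite scale0r.
split.
  move=> b; rewrite /xx; under eq_bigr => th _ do rewrite SigZ.
  rewrite Sig_sum => /Sig_free H th.
  have := H 0%N th (leq_ltn_trans (leq0n _) (ltn_ord th)) (leq_trans (ltn_ord th) m12).
  rewrite (bigD1 th) //= big1 ?addr0; first by rewrite /W add0n eqxx /= mulr1.
  move=> th' hth; rewrite /W add0n; case: eqP => E; last by rewrite mulr0.
  by move: hth; rewrite -val_eqE /= -E eqxx.
split.
  move=> y; split; last first.
    move=> [b ->]; rewrite mulmx_sumr big1 // => th _.
    by rewrite -scalemxAr XTx scaler0.
  have [c ->] := tens_span y; rewrite SigE XTSig => /Sig_free HD.
  exists (fun th => ext c 0%N th).
  rewrite /xx; under eq_bigr => th _ do rewrite SigZ.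
  rewrite Sig_sum; apply: Sig_eq => s t hs ht.
  rewrite (ker_coef _ HD _ _ hs ht).
  rewrite -(@sum_delta m1 (s + t)%N (fun th => ext c 0%N th * wf th s)).
  by apply: eq_bigr => th _; rewrite /W; case: ifP => _; rewrite ?mulr0 // (eqP _).
move=> th y Hy [c Hc].
have Hc' : y = Sig (fun s t => if (s + t == th)%N then ext c s t else 0).
  rewrite Hc; apply: eq_bigr => s _; rewrite big_mkcond /=; apply: eq_bigr => t _.
  by rewrite extE; case: ifP => _ //; rewrite scale0r.
move: Hy; rewrite Hc' XTSig => /Sig_free HD.
exists (if (0 + th == th)%N then ext c 0%N th else 0).
rewrite /xx SigZ; apply: Sig_eq => s t hs ht.
rewrite (ker_coef _ HD _ _ hs ht) /W.
rewrite !add0n eqxx; case: (eqVneq (s + t)%N th) => E.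
  by rewrite E (ltn_ord th).
by rewrite mul0r mulr0 if_same.
Qed.

End Tens.

Section Dim.
Variable K : fieldType.

Lemma span_dim_le (m k : nat) (w : nat -> 'cV[K]_m) :
  (forall v : 'cV[K]_m, exists f : 'I_k -> K, v = \sum_(s < k) f s *: w s) ->
  (m <= k)%N.
Proof.
move=> Hs.
pose X := [tuple w (nat_of_ord s) | s < k].
have: (fullv <= span X)%VS.
  apply/subvP=> v _; have [f ->] := Hs v.
  apply: memv_suml => s _; apply: memvZ; apply: memv_span.
  by apply/mapP; exists s => //; rewrite mem_enum.
move/dimvS; rewrite dimvf /dim /= muln1 => H.
by apply: (leq_trans H); apply: (leq_trans (dim_span _)); rewrite size_map size_enum_ord.
Qed.

Lemma free_dim_le (m k : nat) (w : nat -> 'cV[K]_m) :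
  (forall f : 'I_k -> K, \sum_(s < k) f s *: w s = 0 -> forall s, f s = 0) ->
  (k <= m)%N.
Proof.
move=> Hf.
pose X := [tuple w (nat_of_ord s) | s < k].
have fX : free X.
  apply/freeP => f Hs; apply: Hf; rewrite -[RHS]Hs; apply: eq_bigr => s _.
  by rewrite -tnth_nth tnth_mktuple.
move/eqP: fX; rewrite size_tuple => <-.
have := dimvS (subvf (span X)); rewrite dimvf /dim /= muln1.
done.
Qed.
End Dim.

Section Module.
Variables (K : fieldType) (n d : nat) (q : K) (m : nat) (M : Drep K n m) (u i : 'I_n)
  (h : 'cV[K]_m).
Hypotheses (hd : (2 <= d)%N) (hdn : (d %| n)%N) (hn : (n%:R : K) != 0)
  (hq : d.-primitive_root q) (HL : is_L d q M u i) (hh : h != 0) (hXh : mX M *m h = 0).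

Local Notation G := (mG M).
Local Notation X := (mX M).
Local Notation e := (me M).
Local Notation a := (ma M).
Definition bb (s : nat) := gam M i s *m h.

Lemma n_pos : (0 < n)%N.
Proof. by case: n hn => //; rewrite eqxx. Qed.

Lemma d_le_n : (d <= n)%N.
Proof. exact: dvdn_leq n_pos hdn. Qed.

Lemma q_nz : q != 0.
Proof.
apply/eqP => q0; have := prim_expr_order hq; rewrite q0 expr0n.
by case: d hd => // d' _ /eqP; rewrite eq_sym oner_eq0.
Qed.

Lemma addoE (l : 'I_n) k : nat_of_ord (addo l k) = ((l + k) %% n)%N.
Proof.
elim: k => [|k IH]; first by rewrite addn0 modn_small.
by rewrite /addo iterS /= -/(addo l k) IH -addn1 modnDml addn1 addnS.
Qed.

Lemma addo_inj s s' : (s < d)%N -> (s' < d)%N -> addo i s = addo i s' -> s = s'.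
Proof.
move=> hs hs' /(congr1 val); rewrite /= !addoE => /eqP.
rewrite eqn_modDl !modn_small ?(leq_trans _ d_le_n) // => /eqP //.
Qed.

Lemma addoS (l : 'I_n) k : addo l k.+1 = ordS (addo l k).
Proof. by []. Qed.


Lemma HDr : is_Drep d q M. Proof. by case: HL. Qed.
Lemma HGn : mxpow G n = 1%:M. Proof. by case: HDr. Qed.
Lemma HGX : G *m X = q^-1 *: (X *m G). Proof. by case: HDr => _ [_ [H _]]. Qed.
Lemma Hee l l' : e l *m e l' = if l == l' then e l else 0.
Proof. by case: HDr => _ [_ [_ [H _]]]. Qed.
Lemma Ha l : a l *m e l = a l /\ e (ordS l) *m a l = a l.
Proof. by case: HDr => _ [_ [_ [_ [_ [H _]]]]]. Qed.
Lemma Hgd l : gam M l d = 0.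
Proof. by case: HDr => _ [_ [_ [_ [_ [_ [H _]]]]]]. Qed.
Lemma Hcomm (l : 'I_n) (k : nat) : (k < d)%N ->
         gam M l k *m G = (q ^+ k)^-1 *: (G *m gam M l k)
         /\ gam M l k *m X =
            (q ^+ k)^-1 *: (X *m gam M (ordS l) k)
            - ((q ^+ k)^-1 * qint q k) *: gam M (ordS l) k.-1
            + (q ^+ (l + 1) * (q ^+ k)^-1 * qint q k) *: (G *m gam M (ordS l) k.-1).
Proof. by case: HDr => _ [_ [_ [_ [_ [_ [_ H]]]]]]; apply: H. Qed.
Lemma Hsimple : simple_rep M. Proof. by case: HL. Qed.
Lemma Hm : m = (d - (2 * i + u + d - 1) %% d)%N. Proof. by case: HL. Qed.
Lemma m_le_d : (m <= d)%N. Proof. by rewrite Hm leq_subr. Qed.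

Lemma ker_h w : X *m w = 0 -> exists c, w = c *: h.
Proof.
case: HL => _ _ _ _ [Y [Y0 eY HY]].
have [c0 Hc0] := (HY h).1 hXh.
have c0nz : c0 != 0 by apply: contraNneq hh => c00; rewrite Hc0 c00 scale0r.
move=> /HY [c ->]; exists (c / c0); by rewrite Hc0 scalerA mulfVK.
Qed.

Lemma eh : e i *m h = h.
Proof.
case: HL => _ _ _ _ [Y [Y0 eY HY]].
have [c0 ->] := (HY h).1 hXh.
by rewrite -scalemxAr eY.
Qed.

Lemma e_gam s : e (addo i s) *m gam M i s = gam M i s.
Proof.
elim: s => [|s IH] /=; first by rewrite Hee eqxx.
by rewrite mulmxA (Ha _).2.
Qed.

Lemma e_b l s : e l *m bb s = if l == addo i s then bb s else 0.
Proof.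
rewrite /bb -e_gam !mulmxA Hee; case: eqP => [->|_]; first by rewrite e_gam.
by rewrite !mul0mx.
Qed.

Lemma a_b l s : a l *m bb s = if l == addo i s then bb s.+1 else 0.
Proof.
rewrite -(Ha l).1 -mulmxA e_b; case: eqP => [->|_]; last by rewrite mulmx0.
by rewrite /bb /= mulmxA.
Qed.

Lemma b0 : bb 0 = h.
Proof. by rewrite /bb /= eh. Qed.

Lemma b_big s : (d <= s)%N -> bb s = 0.
Proof.
move=> hs; rewrite -(subnKC hs); elim: (s - d)%N => [|k IH].
  by rewrite addn0 /bb Hgd mul0mx.
by rewrite addnS; have := a_b (addo i (d + k)) (d + k); rewrite eqxx IH mulmx0.
Qed.

Lemma b_mono s t : (s <= t)%N -> bb s = 0 -> bb t = 0.
Proof.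
move=> hst; rewrite -(subnKC hst); elim: (t - s)%N => [|k IH]; first by rewrite addn0.
by move=> H; rewrite addnS; have := a_b (addo i (s + k)) (s + k); rewrite eqxx IH // mulmx0.
Qed.


Lemma Gh : exists lam, G *m h = lam *: h.
Proof.
apply: ker_h.
have XG : X *m G = q *: (G *m X) by rewrite HGX scalerA mulfV ?q_nz // scale1r.
by rewrite mulmxA XG -scalemxAl -mulmxA hXh mulmx0 scaler0.
Qed.

Definition lam := proj1_sig (constructive_indefinite_description _ Gh).
Lemma lamP : G *m h = lam *: h.
Proof. exact: (proj2_sig (constructive_indefinite_description _ Gh)). Qed.

Definition cg (s : nat) := q ^+ s * lam.

Lemma Gb s : G *m bb s = cg s *: bb s.
Proof.
case: (ltnP s d) => hs; last by rewrite b_big // mulmx0 scaler0.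
have E : G *m gam M i s = q ^+ s *: (gam M i s *m G).
  by rewrite (Hcomm i s hs).1 scalerA mulfV ?scale1r // expf_neq0 // q_nz.
by rewrite /bb mulmxA E -scalemxAl -mulmxA lamP -scalemxAr scalerA.
Qed.

Definition cx (k : nat) : K :=
  if (0 < k < d)%N then
    q ^+ k * ((q ^+ k)^-1 * qint q k)
    - q ^+ k * ((q ^+ ((ord_pred i) + 1) * (q ^+ k)^-1 * qint q k) * cg k.-1)
  else 0.

Lemma cx0 : cx 0 = 0. Proof. by []. Qed.

Lemma Xb k : X *m bb k = cx k *: bb k.-1.
Proof.
rewrite /cx; case: k => [|k]; first by rewrite /= b0 hXh scale0r.
case: (ltnP k.+1 d) => hk /=; last by rewrite b_big // mulmx0 scale0r.
have H := congr1 (fun A => A *m h) (Hcomm (ord_pred i) k.+1 hk).2.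
move: H; rewrite /= ord_predK -mulmxA hXh mulmx0 !mulmxDl mulNmx -!scalemxAl -!mulmxA -/(bb k) a_b eqxx Gb scalerA => /eqP; rewrite eq_sym.
rewrite addrAC subr_eq add0r => /eqP HA.
move/(congr1 (fun v => v - (q ^+ ((i + n).-1 %% n + 1) / q ^+ k.+1 * qint q k.+1 * cg k) *: bb k)): HA.
rewrite addrK => HA.
have qk : q ^+ k.+1 != 0 by rewrite expf_neq0 // q_nz.
rewrite -[X *m bb k.+1](scalerKV qk) HA scalerBr !scalerA -scalerBl //.
Qed.


Definition Ssp (v : 'cV[K]_m) := exists f : nat -> K, v = \sum_(s < d) f s *: bb s.

Lemma Ssp_b c k : Ssp (c *: bb k).
Proof.
case: (ltnP k d) => hk; last first.
  by exists (fun _ => 0); rewrite b_big // scaler0 big1 // => s _; rewrite scale0r.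
exists (fun s => if s == k then c else 0).
rewrite (bigD1 (Ordinal hk)) //= eqxx big1 ?addr0 // => s hs.
case: eqP => [E|_]; last by rewrite scale0r.
by move: hs; rewrite -val_eqE /= E eqxx.
Qed.

Lemma SspD v w : Ssp v -> Ssp w -> Ssp (v + w).
Proof.
move=> [f ->] [g ->]; exists (fun s => f s + g s).
by rewrite -big_split; apply: eq_bigr => s _; rewrite scalerDl.
Qed.

Lemma SspZ c v : Ssp v -> Ssp (c *: v).
Proof.
move=> [f ->]; exists (fun s => c * f s).
by rewrite scaler_sumr; apply: eq_bigr => s _; rewrite scalerA.
Qed.

Lemma Ssp0 : Ssp 0.
Proof. by have := Ssp_b 0 0; rewrite scale0r. Qed.

Lemma Ssp_lin (A : 'M[K]_m) : (forall s, Ssp (A *m bb s)) -> forall v, Ssp v -> Ssp (A *m v).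
Proof.
move=> HA v [f ->]; rewrite mulmx_sumr.
elim/big_ind: _ => [|x y|s _]; [exact: Ssp0 | exact: SspD |].
by rewrite -scalemxAr; apply: SspZ.
Qed.

Lemma Ssp_all v : Ssp v.
Proof.
have sub : submodule M Ssp.
  split; [exact: Ssp0 | exact: SspD | exact: SspZ |].
  move=> v0 Hv; split.
  - by apply: Ssp_lin => // s; rewrite Gb; apply: Ssp_b.
  - by apply: Ssp_lin => // s; rewrite Xb; apply: Ssp_b.
  - move=> l; apply: Ssp_lin => // s; rewrite e_b; case: ifP => _.
      by rewrite -[bb s]scale1r; apply: Ssp_b.
    exact: Ssp0.
  - move=> l; apply: Ssp_lin => // s; rewrite a_b; case: ifP => _.
      by rewrite -[bb s.+1]scale1r; apply: Ssp_b.
    exact: Ssp0.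
case: (Hsimple) => _ /(_ _ sub) [H|]; last by apply.
have : Ssp h by rewrite -b0 -[bb 0]scale1r; apply: Ssp_b.
by move/H => h0; move: hh; rewrite h0 eqxx.
Qed.

Lemma span_k k : (k <= d)%N -> bb k = 0 ->
  forall v, exists f : 'I_k -> K, v = \sum_(s < k) f s *: bb s.
Proof.
move=> hk bk v; have [f ->] := Ssp_all v; exists (fun s => f s).
rewrite (bigID (fun s : 'I_d => (s < k)%N)) /= [X in _ + X]big1 ?addr0.
  by rewrite (big_ord_narrow hk).
by move=> s; rewrite -leqNgt => hs; rewrite (b_mono _ _ hs bk) scaler0.
Qed.

Lemma free_k k : (k <= d)%N -> forall f : 'I_k -> K,
  \sum_(s < k) f s *: bb s = 0 -> forall s, f s *: bb s = 0.
Proof.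
move=> hk f H s.
have := congr1 (fun v => e (addo i s) *m v) H; rewrite /= mulmx0 mulmx_sumr.
rewrite (bigD1 s) //= big1 ?addr0; first by rewrite -scalemxAr e_b eqxx.
move=> s' hs'; rewrite -scalemxAr e_b; case: eqP; last by rewrite scaler0.
move=> E; have E' := addo_inj _ _ (leq_trans (ltn_ord s) hk) (leq_trans (ltn_ord s') hk) E.
by move: hs'; rewrite -val_eqE /= E' eqxx.
Qed.

Lemma b_nz s : (s < m)%N -> bb s != 0.
Proof.
move=> hs; apply/eqP => bs.
have := @span_dim_le _ m s bb (span_k _ (leq_trans (ltnW hs) m_le_d) bs).
by rewrite leqNgt hs.
Qed.

Lemma b_m : bb m = 0.
Proof.
apply/eqP; apply: contraT => bm.
have hmd : (m < d)%N by rewrite ltnNge; apply: contra bm => hdm; rewrite b_big.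
have : (m.+1 <= m)%N.
  apply: (@free_dim_le _ m m.+1 bb) => f Hf s.
  have := free_k _ hmd _ Hf s => /eqP; rewrite scaler_eq0 => /orP [/eqP //|/eqP bs].
  exfalso; move/negP: bm; apply; apply/eqP; apply: (b_mono _ _ _ bs).
  by rewrite -ltnS.
by rewrite ltnn.
Qed.

Lemma free_m (f : 'I_m -> K) : \sum_(s < m) f s *: bb s = 0 -> forall s, f s = 0.
Proof.
move=> H s; have := free_k _ m_le_d _ H s => /eqP; rewrite scaler_eq0 (negbTE (b_nz _ (ltn_ord s))).
by rewrite orbF => /eqP.
Qed.

Lemma span_m v : exists f : 'I_m -> K, v = \sum_(s < m) f s *: bb s.
Proof. exact: span_k _ m_le_d b_m v. Qed.

Lemma cx_nz s : (0 < s < m)%N -> cx s != 0.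
Proof.
case/andP => s0 sm; apply/eqP => c0.
have := Xb s; rewrite c0 scale0r => /ker_h [c Hc].
have hsd : (s < d)%N := leq_trans sm m_le_d.
have := e_b i s; rewrite Hc -scalemxAr eh.
case: eqP => [E|_].
  have : addo i 0 = addo i s by rewrite -E /addo.
  move=> E1; have E0 := addo_inj 0 s (leq_ltn_trans (leq0n s) hsd) hsd E1.
  by rewrite -E0 in s0.
move=> E; move: (b_nz _ sm); by rewrite Hc -E eqxx.
Qed.

Lemma G_inv : exists P : 'M[K]_m, P *m G = 1%:M.
Proof.
exists (mxpow G n.-1); apply: mulmx1C.
have E : forall (A : 'M[K]_m) k, (0 < k)%N -> mxpow A k = A *m mxpow A k.-1.
  by move=> A [].
by rewrite -E ?n_pos // HGn.
Qed.

Lemma cg_nz s : (s < m)%N -> cg s != 0.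
Proof.
move=> hs; apply/eqP => c0; have [P HP] := G_inv.
move: (b_nz _ hs); rewrite -[bb s]mul1mx -HP -mulmxA Gb c0 scale0r mulmx0 eqxx //.
Qed.


Lemma chain :
  [/\ (forall f : 'I_m -> K, \sum_(s < m) f s *: bb s = 0 -> forall s, f s = 0),
      (forall v, exists f : 'I_m -> K, v = \sum_(s < m) f s *: bb s),
      (forall s, X *m bb s = cx s *: bb s.-1) & [/\ cx 0 = 0,
      (forall s, (0 < s < m)%N -> cx s != 0),
      (forall s, G *m bb s = cg s *: bb s) &
      (forall s, (s < m)%N -> cg s != 0)]].
Proof.
split; [exact: free_m | exact: span_m | exact: Xb | split; [exact: cx0 | exact: cx_nz | exact: Gb | exact: cg_nz]].
Qed.

End Module.

Theorem mainTheorem11 (K : closedFieldType) (n d : nat) (q : K)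
  (u i v j : 'I_n) (m1 m2 : nat) (M : Drep K n m1) (N : Drep K n m2)
  (h : 'cV[K]_m1) (h' : 'cV[K]_m2) :
  (2 <= d)%N -> (d %| n)%N -> (n%:R : K) != 0 -> d.-primitive_root q ->
  is_L d q M u i -> is_L d q N v j -> (m1 <= m2)%N ->
  h != 0 -> mX M *m h = 0 -> h' != 0 -> mX N *m h' = 0 ->
  let z := fun (s : 'I_m1) (t : 'I_m2) =>
             tensmx (gam M i s *m h) (gam N j t *m h') in
  let homog := fun (th : nat) (y : 'M[K]_(m1 * m2, 1 * 1)) =>
    exists c : 'I_m1 -> 'I_m2 -> K,
      y = \sum_(s < m1) \sum_(t < m2 | (s + t)%N == th) c s t *: z s t in
  let XT := Xtens M N in
  (* the z_{s,t} form a basis of L(u,i) (x) L(v,j) *)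
  (forall c : 'I_m1 -> 'I_m2 -> K,
     \sum_(s < m1) \sum_(t < m2) c s t *: z s t = 0 -> forall s t, c s t = 0) /\
  (forall y : 'M[K]_(m1 * m2, 1 * 1),
     exists c : 'I_m1 -> 'I_m2 -> K, y = \sum_(s < m1) \sum_(t < m2) c s t *: z s t) /\
  (* ker X has a basis (x_th)_{th < alpha}, x_th homogeneous of degree th,
     unique up to scalars in each degree *)
  exists x : 'I_m1 -> 'M[K]_(m1 * m2, 1 * 1),
    (forall th : 'I_m1, [/\ x th != 0, XT *m x th = 0 & homog th (x th)]) /\
    (forall b : 'I_m1 -> K, \sum_(th < m1) b th *: x th = 0 -> forall th, b th = 0) /\
    (forall y, XT *m y = 0 <-> exists b : 'I_m1 -> K, y = \sum_(th < m1) b th *: x th) /\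
    (forall (th : 'I_m1) y, XT *m y = 0 -> homog th y -> exists c : K, y = c *: x th).
Proof.
Proof.
move=> hd hdn hn hq HLM HLN hm12 hh hXh hh' hXh'.
have [f1 s1 X1b [c10 c1nz _ _]] := @chain _ _ _ _ _ _ _ _ _ hd hdn hn hq HLM hh hXh.
have [f2 s2 X2b [c20 c2nz G2b g2nz]] := @chain _ _ _ _ _ _ _ _ _ hd hdn hn hq HLN hh' hXh'.
exact: (@abstract_main _ _ _ _ _ _ _ _ _ _ _ f1 s1 f2 s2 X1b c10 c1nz X2b c20 c2nz G2b g2nz hm12).
Qed.
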